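(* Let $\mathcal{L}:\mathbb{R}^n\to\mathbb{R}$ be a differentiable loss of the network weight $w$, reparameterized by hidden weight $\theta\in\mathbb{R}^n$ and a global scalar threshold $d\ge0$ as $w(\theta,d)=\mathcal{S}_d(\theta)$. Run vanilla SGD on the hidden weight with learning rate $\eta^{(t)}>0$ and threshold $d^{(t)}$ at iteration $t$: $$\theta^{(t+1)}=\theta^{(t)}-\eta^{(t)}\,\nabla_w\mathcal{L}(w^{(t)})\odot\nabla_\theta w(\theta^{(t)},d^{(t)}),\qquad w^{(t)}=\mathcal{S}_{d^{(t)}}(\theta^{(t)}),$$ where the $i$-th component of $\nabla_\theta w(\theta^{(t)},d^{(t)})$ is the derivative of $\theta\mapsto\mathcal{S}_{d^{(t)}}(\theta)$ at $\theta_i^{(t)}$ whenever $|\theta_i^{(t)}|\ne d^{(t)}$. Then the update is locally equivalent to ISTA applied to $$\min_w\Big\{F(w):=\mathcal{L}(w)+\frac{d^{(t+1)}-d^{(t)}}{\eta^{(t)}}\|w\|_1\Big\}$$ with step size $\eta^{(t)}$: namely, for every nonzero component $w_i^{(t)}\neq0$ with $|\theta_i^{(t+1)}|>d^{(t)}$ and $\operatorname{sign}(\theta_i^{(t+1)})=\operatorname{sign}(\theta_i^{(t)})$, one has $w_i^{(t+1)}=\big[\mathcal{S}_{\mu^{(t)}\eta^{(t)}}\big(w^{(t)}-\eta^{(t)}\nabla\mathcal{L}(w^{(t)})\big)\big]_i$ with $\mu^{(t)}=(d^{(t+1)}-d^{(t)})/\eta^{(t)}$, which is the ISTA update for the $L_1$-penalized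 objective $\mathcal{L}(w)+\mu^{(t)}\|w\|_1$.
   Context: $\odot$ is the element-wise product. The soft threshold mapping is $\mathcal{S}_d(x)_i=\operatorname{sign}(x_i)\max\{|x_i|-d,0\}$. The ISTA (proximal gradient) update with step size $\eta$ for $\min_x f(x)+\mu\|x\|_1$ is $x^{(t+1)}=\mathcal{S}_{\mu\eta}(x^{(t)}-\eta\nabla f(x^{(t)}))$. *)

(* Defs.v *)
From HB Require Import structures.
From mathcomp Require Import all_boot all_order all_algebra.
From mathcomp Require Import all_classical all_reals all_analysis.
Set Implicit Arguments. Unset Strict Implicit. Unset Printing Implicit Defensive.
Import Order.TTheory GRing.Theory Num.Theory.
Import numFieldNormedType.Exports.
Local Open Scope ring_scope.

Definition soft {R : realType} (d x : R) : R := Num.sg x * Num.max (`|x| - d) 0.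

Definition softv {R : realType} {n : nat} (d : R) (x : 'rV[R]_n) : 'rV[R]_n :=
  map_mx (soft d) x.

Definition hadamard {R : realType} {n : nat} (a b : 'rV[R]_n) : 'rV[R]_n :=
  \row_j (a 0 j * b 0 j).

Definition grad {R : realType} {n : nat} (L : 'rV[R]_n -> R) (w : 'rV[R]_n) : 'rV[R]_n :=
  \row_i ('d L w (delta_mx 0 i)).

(* Main.v *)
Require Import Defs.
From HB Require Import structures.
From mathcomp Require Import all_boot all_order all_algebra.
From mathcomp Require Import all_classical all_reals all_analysis.
From mathcomp Require Import ring lra.
Import Order.TTheory GRing.Theory Num.Theory.
Import numFieldNormedType.Exports.
Local Open Scope ring_scope.

Lemma key (R : realType) (d d' e a b g : R) : e != 0 -> 0 <= d -> d < `|a| -> d < `|b| ->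
  Num.sg b = Num.sg a -> b = a - e * g ->
  soft d' b = soft ((d' - d) / e * e) (soft d a - e * g).
Proof.
move=> e0 d0 da db sba bE; rewrite /soft divfK //.
have [a0|a0|a0] := ltrgtP 0 a.
- have b0 : 0 < b by rewrite -sgr_gt0 sba gtr0_sg.
    have sa : Num.sg a = 1 by apply: gtr0_sg.
  rewrite sa (gtr0_norm a0) mul1r.
  rewrite (gtr0_norm b0) in db; rewrite (gtr0_norm a0) in da.
  have -> : Num.max (a - d) 0 = a - d by apply/max_idPl; rewrite subr_ge0 ltW.
  have h : a - d - e * g = b - d by rewrite bE; ring.
  have hp : 0 < b - d by rewrite subr_gt0.
  by rewrite h (gtr0_sg hp) (gtr0_norm hp) (gtr0_sg b0) (gtr0_norm b0); congr (_ * Num.max _ _); ring.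
- have b0 : b < 0 by rewrite -sgr_lt0 sba ltr0_sg.
  have sa : Num.sg a = -1 by apply: ltr0_sg.
  rewrite sa (ltr0_norm a0).
  rewrite (ltr0_norm b0) in db; rewrite (ltr0_norm a0) in da.
  have -> : Num.max (- a - d) 0 = - a - d by apply/max_idPl; rewrite subr_ge0 ltW.
  have h : -1 * (- a - d) - e * g = b + d by rewrite bE; ring.
  have hp : b + d < 0 by rewrite -(opprK b) addrC subr_lt0.
  rewrite h (ltr0_sg hp) (ltr0_norm hp) (ltr0_sg b0) (ltr0_norm b0); congr (_ * Num.max _ _); ring.
- by rewrite -a0 normr0 ltNge d0 in da.
Qed.

Lemma deriv1 (R : realType) (d a D : R) : 0 <= d -> d < `|a| ->
  is_derive a (1 : R) (soft d) D -> D = 1.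
Proof.
move=> d0 da H.
have Hn : \forall x \near a, soft d x = x - Num.sg a * d.
  have [a0|a0|a0] := ltrgtP 0 a.
  - rewrite (gtr0_norm a0) in da.
    have := @Nlt_nbhsl R a (- d); rewrite ltrN2 => /(_ da).
    apply: filterS => y; rewrite ltrNl opprK => dy.
    have y0 : 0 < y by apply: le_lt_trans dy.
    rewrite /soft [Num.sg a]gtr0_sg // (gtr0_sg y0) (gtr0_norm y0) !mul1r.
    by apply/max_idPl; rewrite subr_ge0 ltW.
  - rewrite (ltr0_norm a0) in da.
    have := @lt_nbhsl R a (- d); rewrite ltrNr => /(_ da).
    apply: filterS => y dy.
    have y0 : y < 0 by apply: (lt_le_trans dy); rewrite oppr_le0.
    rewrite /soft [Num.sg a]ltr0_sg // (ltr0_sg y0) (ltr0_norm y0).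
    have -> : Num.max (- y - d) 0 = - y - d by apply/max_idPl; rewrite subr_ge0 ltW // ltrNr.
    ring.
  - by rewrite -a0 normr0 ltNge d0 in da.
have H2 := near_eq_is_derive Hn H.
have := @derive_val _ _ _ _ _ _ _ H2.
have H3 : is_derive a (1:R) (fun x : R => x - Num.sg a * d) 1.
  by rewrite -[X in is_derive _ _ _ X]subr0; apply: is_deriveB.
by rewrite (@derive_val _ _ _ _ _ _ _ H3) => <-.
Qed.

Theorem theorem1 (R : realType) (n : nat) (L : 'rV[R]_n -> R)
  (theta : nat -> 'rV[R]_n) (d eta : nat -> R) (Dw : nat -> 'rV[R]_n) (t : nat) :
  (forall w, differentiable L w) ->
  (forall s, 0 <= d s) ->
  (forall s, 0 < eta s) ->
  (forall s i, `|theta s 0 i| != d s ->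
     is_derive (theta s 0 i) (1 : R) (soft (d s)) (Dw s 0 i)) ->
  (forall s, theta s.+1 =
     theta s - eta s *: hadamard (grad L (softv (d s) (theta s))) (Dw s)) ->
  forall i : 'I_n,
    softv (d t) (theta t) 0 i != 0 ->
    d t < `|theta t.+1 0 i| ->
    Num.sg (theta t.+1 0 i) = Num.sg (theta t 0 i) ->
    let mu := (d t.+1 - d t) / eta t in
    softv (d t.+1) (theta t.+1) 0 i =
    softv (mu * eta t)
      (softv (d t) (theta t) - eta t *: grad L (softv (d t) (theta t))) 0 i.
Proof.
move=> _ d0 eta0 Hder Hupd i wn0 db sb mu.
have da : d t < `|theta t 0 i|.
  rewrite ltNge; apply/negP => ad; move: wn0; rewrite /softv mxE /soft.
  have -> : Num.max (`|theta t 0 i| - d t) 0 = 0 by apply/max_idPr; rewrite subr_le0.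
  by rewrite mulr0 eqxx.
have D1 : Dw t 0 i = 1.
  have H : `|theta t 0 i| != d t by rewrite gt_eqF.
  have H2 := Hder t i H. exact: (@deriv1 R _ _ _ (d0 t) da H2).
have bE : theta t.+1 0 i = theta t 0 i - eta t * (grad L (softv (d t) (theta t)) 0 i).
  by rewrite Hupd !mxE D1 mulr1.
rewrite /mu /softv !mxE.
apply: (@key R) => //. all: try (by rewrite gt_eqF). all: try exact: d0. all: by rewrite bE /grad mxE.
Qed.
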